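(* For every $k\ge1$, $S^{(k)}_{-1}=0$ (and hence also the $\eta^{1}$-coefficient of $S^{(k)}_{\rm odd}$ vanishes).
   Context: Let $\eta$ be a large parameter, $c\neq0$. $(H_{\rm II})$: $\frac{d\lambda}{dt}=\eta\nu$, $\frac{d\nu}{dt}=\eta(2\lambda^3+t\lambda+c)$. Let $\lambda_0$ be a branch of $2\lambda_0^3+t\lambda_0+c=0$, $\Delta=6\lambda_0^2+t$, $\tau_1$ a zero of $\Delta$, $\phi_{\rm II}=\int_{\tau_1}^t\sqrt\Delta\,dt$. A 1-parameter solution of $(H_{\rm II})$ is a formal transseries $\lambda=\sum_{k\ge0}(\alpha\eta^{-1/2})^k\lambda^{(k)}(t,c,\eta)e^{k\eta\phi_{\rm II}}$, $\nu=\eta^{-1}\frac{d\lambda}{dt}=\sum_{k\ge0}(\alpha\eta^{-1/2})^k\nu^{(k)}e^{k\eta\phi_{\rm II}}$, with $\alpha$ a free parameter, $\lambda^{(k)},\nu^{(k)}$ formal power series in $\eta^{-1}$, $(\lambda^{(0)},\nu^{(0)})$ the 0-parameter solution (formal power series solution with leading terms $\lambda_0$, $0$), solving $(H_{\rm II})$ formally. Substitute it into $Q_{\rm II}=x^4+tx^2+2cx+2K_{\rm II}-\eta^{-1}\frac{\nu}{x-\lambda}+\eta^{-2}\frac{3}{4(x-\lambda)^2}$, $K_{\rm II}=\frac12[\nu^2-(\lambda^4+t\lambda^2+2c\lambda)]$, and $A_{\rm II}=\frac{1}{2(x-\lambda)}$, expanded as formal series $Q_{\rm II}=\sum_k(\alpha\eta^{-1/2})^kQ^{(k)}_{\rm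 II}e^{k\eta\phi_{\rm II}}$, $Q^{(k)}_{\rm II}=\sum_{\ell\ge0}\eta^{-\ell}Q^{(k)}_\ell(x,t,c)$ (similarly $A_{\rm II}$). The leading term is $Q_0=Q^{(0)}_0=(x-\lambda_0)^2(x^2+2\lambda_0x+3\lambda_0^2+t)$; let $S_{-1}=\sqrt{Q_0}$ with $S_{-1}\sim x^2$ at $\infty$. Let $S=\sum_{k\ge0}(\alpha\eta^{-1/2})^kS^{(k)}e^{k\eta\phi_{\rm II}}$, $S^{(k)}=\sum_{\ell\ge-1}\eta^{-\ell}S^{(k)}_\ell(x,t,c)$, be the formal solution of the Riccati equation $S^2+\partial_xS=\eta^2Q_{\rm II}$ with $S^{(0)}_{-1}=S_{-1}$, all coefficients being determined recursively by $2S_{-1}S^{(k)}_{\ell+1}+\sum_{k_1+k_2=k,\ell_1+\ell_2=\ell,0\le k_j<k\text{ or }\dots}S^{(k_1)}_{\ell_1}S^{(k_2)}_{\ell_2}+\partial_xS^{(k)}_\ell=Q^{(k)}_{\ell+2}$ (the sum over all pairs other than those involving $S_{-1}S^{(k)}_{\ell+1}$). $S^\dagger$ is the analogous solution with $S^{\dagger(0)}_{-1}=-S_{-1}$ and $S_{\rm odd}=\frac12(S-S^\dagger)$. One has the compatibility relation $\partial_tS=\partial_x(A_{\rm II}S-\frac12\partial_xA_{\rm II})$, which holds because $(\lambda,\nu)$ solves $(H_{\rm II})$. *)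

(* Defs.v *)
From HB Require Import structures.
From mathcomp Require Import all_boot all_order all_algebra.
Set Implicit Arguments. Unset Strict Implicit. Unset Printing Implicit Defensive.
Import Order.TTheory GRing.Theory Num.Theory.
Local Open Scope ring_scope.

(* A formal transseries  F = sum_{k>=0} sum_{l>=0} (alpha eta^{-1/2})^k e^{k eta phi} eta^{-l} F k l
   is represented by its coefficient array  F : nat -> nat -> K,
   F k l = F^{(k)}_l  (k = transseries level, l = power of eta^{-1}).
   The monomials multiply as in a two-variable power series ring. *)
Definition ser (K : Type) := nat -> nat -> K.

Section Ser.
Variable K : fieldType.

Definition sconst (a : K) : ser K :=
  fun k l => if (k == 0%N) && (l == 0%N) then a else 0.
Definition sadd (f g : ser K) : ser K := fun k l => f k l + g k l.
Definition ssub (f g : ser K) : ser K := fun k l => f k l - g k l.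
Definition sscale (a : K) (f : ser K) : ser K := fun k l => a * f k l.
Definition smul (f g : ser K) : ser K :=
  fun k l => \sum_(i < k.+1) \sum_(j < l.+1) f i j * g (k - i)%N (l - j)%N.
Definition sexp (f : ser K) (n : nat) : ser K := iter n (smul f) (sconst 1).
(* multiplication by eta^{-1} *)
Definition sh (f : ser K) : ser K := fun k l => if l is l'.+1 then f k l' else 0.
(* multiplicative inverse (geometric expansion around the constant term f 0 0) *)
Definition sinv (f : ser K) : ser K :=
  let a := f 0%N 0%N in let g := ssub f (sconst a) in
  fun k l => \sum_(n < (k + l).+1) ((-1) ^+ n * a ^- n.+1) * sexp g n k l.

(* eta^{-1} d/dt on transseries, where Dt is d/dt on coefficients and
   d(phi_II)/dt = s = sqrt(Delta), so d/dt e^{k eta phi} = k eta s e^{k eta phi}. *)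
Definition ddt (Dt : K -> K) (s : K) (f : ser K) : ser K :=
  fun k l => k%:R * s * f k l + (if l is l'.+1 then Dt (f k l') else 0).

Definition nu_of (Dt : K -> K) (s : K) (lam : ser K) : ser K := ddt Dt s lam.

Definition PII (t c : K) (lam : ser K) : ser K :=
  sadd (sscale 2 (sexp lam 3)) (sadd (sscale t lam) (sconst c)).

Definition KII (t c : K) (lam nu : ser K) : ser K :=
  sscale (1 / 2) (ssub (sexp nu 2)
    (sadd (sexp lam 4) (sadd (sscale t (sexp lam 2)) (sscale (2 * c) lam)))).

Definition QII (t c x : K) (lam nu : ser K) : ser K :=
  let ixl := sinv (ssub (sconst x) lam) in
  sadd (sconst (x ^+ 4 + t * x ^+ 2 + 2 * c * x))
  (sadd (sscale 2 (KII t c lam nu))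
  (sadd (sscale (-1) (sh (smul nu ixl)))
        (sh (sh (sscale (3 / 4) (sexp ixl 2)))))).

(* Riccati equation S^2 + d_x S = eta^2 Q_II, coefficientwise.
   S is stored with shifted eta-index:  S k j = S^{(k)}_{j-1}  (j >= 0),
   so that S k 0 is the eta^1 coefficient S^{(k)}_{-1}. *)
Definition riccati (Dx : K -> K) (Q S : ser K) : Prop :=
  forall k j, smul S S k j + (if j is j'.+1 then Dx (S k j') else 0) = Q k j.

Definition Sodd (S Sd : ser K) : ser K := fun k j => (S k j - Sd k j) / 2.

Definition derivation (D : K -> K) : Prop :=
  (forall a b, D (a + b) = D a + D b) /\ (forall a b, D (a * b) = D a * b + a * D b).

End Ser.

(* Main.v *)
Require Import Defs.
From HB Require Import structures.
From mathcomp Require Import all_boot all_order all_algebra.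
From mathcomp Require Import ring.
Import Order.TTheory GRing.Theory Num.Theory.
Local Open Scope ring_scope.

Section Aux.
Variable K : fieldType.

Definition ag (n : nat) (f : ser K) (p : {poly K}) :=
  forall j, (j <= n)%N -> f j 0%N = p`_j.

Lemma ag_const n a : ag n (sconst a) a%:P.
Proof. by move=> j _; rewrite /sconst coefC andbT. Qed.

Lemma ag_add n f g p q : ag n f p -> ag n g q -> ag n (sadd f g) (p + q).
Proof. by move=> hf hg j hj; rewrite /sadd coefD hf ?hg. Qed.

Lemma ag_sub n f g p q : ag n f p -> ag n g q -> ag n (ssub f g) (p - q).
Proof. by move=> hf hg j hj; rewrite /ssub coefB hf ?hg. Qed.

Lemma ag_scale n a f p : ag n f p -> ag n (sscale a f) (a%:P * p).
Proof. by move=> hf j hj; rewrite /sscale coefCM hf. Qed.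

Lemma ag_mul n f g p q : ag n f p -> ag n g q -> ag n (smul f g) (p * q).
Proof.
move=> hf hg j hj; rewrite /smul coefM; apply: eq_bigr => i _.
rewrite big_ord1 sub0n hf ?hg //.
  by apply: leq_trans (leq_subr _ _) hj.
by apply: leq_trans hj; rewrite -ltnS.
Qed.

Lemma ag_exp n f p m : ag n f p -> ag n (sexp f m) (p ^+ m).
Proof.
move=> hf; elim: m => [|m IH]; first by rewrite expr0; exact: ag_const.
by rewrite exprS; apply: ag_mul.
Qed.

Definition tp (n : nat) (f : ser K) : {poly K} := \poly_(i < n.+1) f i 0%N.

Lemma ag_tp n f : ag n f (tp n f).
Proof. by move=> j hj; rewrite /tp coef_poly ltnS hj. Qed.


Lemma coefXD (p : {poly K}) k : ('X * p^`())`_k = p`_k *+ k.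
Proof. by rewrite coefXM; case: k => [|k] //=; rewrite coef_deriv. Qed.

Lemma energy (k : nat) (Dt : K -> K) (s t c : K) (lam : ser K) :
  [pchar K] =i pred0 -> (0 < k)%N ->
  (forall j, (j <= k)%N -> ddt Dt s (nu_of Dt s lam) j 0%N = PII t c lam j 0%N) ->
  KII t c lam (nu_of Dt s lam) k 0%N = 0.
Proof.
move=> hch hk hode.
set nu := nu_of Dt s lam.
set A := tp k lam; set B := tp k nu.
have hA : ag k lam A := ag_tp k lam.
have hB : ag k nu B := ag_tp k nu.
have hBA : B = s%:P * ('X * A^`()).
  apply/polyP => j; rewrite coefCM coefXM /B /A coef_poly.
  case: j => [|j] /=.
    by rewrite /nu /nu_of /ddt mul0r mul0r addr0 mulr0.
  rewrite -/A (coef_deriv A) /A coef_poly.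
  case: ifP => _; last by rewrite mul0rn mulr0.
  by rewrite /nu /nu_of /ddt addr0 -mulr_natr; ring.
set P := 2%:P * A^+3 + (t%:P * A + c%:P).
have hP : ag k (PII t c lam) P.
  apply: ag_add; first by apply: ag_scale; apply: ag_exp.
  by apply: ag_add; [apply: ag_scale | apply: ag_const].
set E := B^+2 - (A^+4 + (t%:P * A^+2 + (2*c)%:P * A)).
have hK : ag k (KII t c lam nu) ((1/2)%:P * E).
  apply: ag_scale; apply: ag_sub; first by apply: ag_exp.
  apply: ag_add; first by apply: ag_exp.
  by apply: ag_add; apply: ag_scale => //; apply: ag_exp.
set R := s%:P * ('X * B^`()) - P.
have hR : forall j, (j <= k)%N -> R`_j = 0.
  move=> j hj; rewrite /R coefB coefCM coefXM -hP // -hode // /ddt addr0.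
  case: j hj => [|j] hj /=; first by rewrite mulr0 mul0r mul0r subrr.
  by rewrite coef_deriv -hB // -mulr_natr -/nu; ring.
have key : 'X * E^`() = 2%:P * ('X * A^`()) * R.
  rewrite /E /R /P !exprS !expr0 !mulr1.
  rewrite !(derivB, derivD, derivM, derivC).
  move: (B^`()) => B'.
  rewrite hBA polyCM polyC_natr.
  ring.
have hE : E`_k *+ k = 0.
  rewrite -coefXD key coefM big1 // => i _.
  by rewrite hR ?mulr0 // leq_subr.
have hE0 : E`_k = 0.
  move/eqP: hE; rewrite -mulr_natr mulf_eq0 => /orP [/eqP //|].
  by move/pcharf0P: hch => ->; move/eqP=> k0; rewrite k0 in hk.
by rewrite hK // coefCM hE0 mulr0.
Qed.

Lemma smul0 (f g : ser K) k : smul f g k 0%N = \sum_(i < k.+1) f i 0%N * g (k - i)%N 0%N.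
Proof. by apply: eq_bigr => i _; rewrite big_ord1 sub0n. Qed.

Lemma Sk0 (Dx : K -> K) (Q S : ser K) (a : K) : a != 0 -> (2 : K) != 0 ->
  S 0%N 0%N = a -> riccati Dx Q S -> (forall k, (0 < k)%N -> Q k 0%N = 0) ->
  forall k, (0 < k)%N -> S k 0%N = 0.
Proof.
move=> ha h2 hS0 hric hQ k; elim/ltn_ind: k => k IH hk.
case: k IH hk => [//|k] IH _.
have := hric k.+1 0%N; rewrite addr0 hQ // smul0 big_ord_recl big_ord_recr /=.
rewrite big1 ?add0r; last first.
  move=> i _; rewrite IH ?mul0r //=.
  by rewrite ltnS ltn_ord.
rewrite /bump /= add1n subnn subn0 hS0 => h.
have : (2 * a) * S k.+1 0%N = 0 by rewrite -h; ring.
by move/eqP; rewrite !mulf_eq0 (negbTE h2) (negbTE ha) /= => /eqP.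
Qed.

Lemma Qk0 t c x (lam nu : ser K) k : (0 < k)%N ->
  QII t c x lam nu k 0%N = 2 * KII t c lam nu k 0%N.
Proof.
case: k => // k _.
by rewrite /QII /sadd /sconst /sscale /sh /= mulr0 !addr0 add0r.
Qed.

Lemma der0 (D : K -> K) : derivation D -> D 0 = 0.
Proof. by case=> hadd _; apply: (addrI (D 0)); rewrite -hadd !addr0. Qed.

Lemma der1 (D : K -> K) : derivation D -> D 1 = 0.
Proof.
case=> hadd hmul; have h := hmul 1 1; rewrite !mulr1 mul1r in h.
by apply: (addrI (D 1)); rewrite -h addr0.
Qed.

Lemma dernat (D : K -> K) n : derivation D -> D n%:R = 0.
Proof.
move=> hD; elim: n => [|n IH]; first exact: der0.
by rewrite mulrS; case: (hD) => hadd _; rewrite hadd IH (@der1 D hD) addr0.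
Qed.
End Aux.
Arguments energy {K}.
Arguments Sk0 {K}.
Arguments Qk0 {K}.
Arguments der0 {K}.
Arguments der1 {K}.
Arguments dernat {K}.

Theorem mainTheorem9 (K : fieldType) (Dt Dx : K -> K)
    (t c x lam0 s Sm1 : K) (lam S Sd : ser K) :
  [pchar K] =i pred0 ->
  derivation Dt -> derivation Dx ->
  Dt t = 1 -> Dt x = 0 -> Dt c = 0 ->
  Dx x = 1 -> Dx t = 0 -> Dx c = 0 ->
  c != 0 ->
  2 * lam0 ^+ 3 + t * lam0 + c = 0 ->
  s ^+ 2 = 6 * lam0 ^+ 2 + t ->
  Dx lam0 = 0 -> Dx s = 0 -> (forall k l, Dx (lam k l) = 0) ->
  lam 0%N 0%N = lam0 ->
  (forall k l, ddt Dt s (nu_of Dt s lam) k l = PII t c lam k l) ->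
  Sm1 ^+ 2 = (x - lam0) ^+ 2 * (x ^+ 2 + 2 * lam0 * x + 3 * lam0 ^+ 2 + t) ->
  S 0%N 0%N = Sm1 -> riccati Dx (QII t c x lam (nu_of Dt s lam)) S ->
  Sd 0%N 0%N = - Sm1 -> riccati Dx (QII t c x lam (nu_of Dt s lam)) Sd ->
  forall k, (0 < k)%N -> S k 0%N = 0 /\ Sodd S Sd k 0%N = 0.
Proof.
move=> hch hDt hDx _ _ _ Dxx Dxt Dxc _ _ _ Dxl0 _ _ _ hode hSm1 hS0 hS hSd0 hSd k hk.
have h2 : (2 : K) != 0 by move/pcharf0P: hch => ->.
have hQ : forall k, (0 < k)%N -> QII t c x lam (nu_of Dt s lam) k 0%N = 0.
  by move=> j hj; rewrite Qk0 // (energy j Dt s t c lam hch hj) ?mulr0 // => i _; apply: hode.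
have hSm : Sm1 != 0.
  apply/negP => /eqP e0; move: hSm1; rewrite e0 expr0n /= => /eqP.
  rewrite eq_sym mulf_eq0 expf_eq0 /= => /orP [/eqP hx | /eqP hq].
    move/eqP: hx; rewrite subr_eq0 => /eqP hx.
    by move: Dxx; rewrite hx Dxl0 => /eqP; rewrite eq_sym oner_eq0.
  have e := congr1 Dx hq; rewrite (der0 _ hDx) in e.
  case: (hDx) => hadd hmul.
  rewrite !expr2 !hadd !hmul Dxx Dxl0 Dxt (dernat Dx 2 hDx) (dernat Dx 3 hDx) in e.
  have e2 : 2 * (x + lam0) = 0 by rewrite -e; ring.
  move/eqP: e2; rewrite mulf_eq0 (negbTE h2) /= => /eqP e3.
  have := congr1 Dx e3; rewrite hadd Dxx Dxl0 addr0 (der0 _ hDx) => /eqP.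
  by rewrite oner_eq0.
have hSk := Sk0 _ _ _ _ hSm h2 hS0 hS hQ k hk.
have hSdk := Sk0 _ _ _ (- Sm1) _ h2 hSd0 hSd hQ k hk.
rewrite /Sodd hSk hSdk ?oppr_eq0 // subrr mul0r; split => //.
Qed.
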